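(* Let $\Sigma\subset\mathbb G$ be a regular surface. At every non-characteristic point of $\Sigma$, the Riemannian mean curvature $\mathcal H_L$ of $\Sigma$ in $(\mathbb G,g_L)$ satisfies $$\lim_{L\to+\infty}\mathcal H_L=X_1(\bar p)+X_2(\bar q)-\bar p.$$
   Context: $\mathbb G=(0,\infty)\times\mathbb R^2$ is the affine group with coordinates $(x_1,x_2,x_3)$ and law $(a,b,c)\star(x,y,z)=(ax,ay+b,z+c)$. Let $X_1=x_1\partial_{x_1}$, $X_2=x_1\partial_{x_2}+\partial_{x_3}$, $X_3=x_1\partial_{x_2}$, with dual forms $\omega_1=x_1^{-1}dx_1$, $\omega_2=dx_3$, $\omega=x_1^{-1}dx_2-dx_3$. For $L>0$, $g_L=\omega_1\otimes\omega_1+\omega_2\otimes\omega_2+L\,\omega\otimes\omega$ (so $X_1,X_2,\widetilde X_3:=L^{-1/2}X_3$ is orthonormal) and $\nabla^L$ is its Levi-Civita connection. A regular surface is a Euclidean $C^2$-smooth compact oriented surface $\Sigma=\{u=0\}$ with $u:\mathbb G\to\mathbb R$ Euclidean $C^2$ and $(u_{x_1},u_{x_2},u_{x_3})\ne0$. Put $p=X_1u$, $q=X_2u$, $r=\widetilde X_3u$, $l=\sqrt{p^2+q^2}$, $l_L=\sqrt{p^2+q^2+r^2}$, $\bar p=p/l$, $\bar q=q/l$, $\bar p_L=p/l_L$, $\bar q_L=q/l_L$, $\bar r_L=r/l_L$. A point is non-characteristic if $l\ne0$. There, $v_L=\bar p_LX_1+\bar q_LX_2+\bar r_L\widetilde X_3$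 is the unit normal, and $e_1=\bar qX_1-\bar pX_2$, $e_2=\bar r_L\bar pX_1+\bar r_L\bar qX_2-\frac{l}{l_L}\widetilde X_3$ is an orthonormal tangent frame. The mean curvature is $\mathcal H_L=\langle\nabla^L_{e_1}v_L,e_1\rangle_L+\langle\nabla^L_{e_2}v_L,e_2\rangle_L$ (trace of the second fundamental form $(\langle\nabla^L_{e_i}v_L,e_j\rangle_L)_{i,j}$). *)

(* Defs.v *)
From HB Require Import structures.
From mathcomp Require Import all_boot all_order all_algebra.
From mathcomp Require Import all_classical all_reals all_analysis.
Set Implicit Arguments. Unset Strict Implicit. Unset Printing Implicit Defensive.
Import Order.TTheory GRing.Theory Num.Theory.
Import numFieldNormedType.Exports.
Local Open Scope classical_set_scope.
Local Open Scope ring_scope.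

Section Defs.
Variable R : realType.

Definition pt := (R * R * R)%type.
Definition x1 (x : pt) : R := x.1.1.
Definition x2 (x : pt) : R := x.1.2.
Definition x3 (x : pt) : R := x.2.

Definition G : set pt := [set x | 0 < x1 x].

(* Euclidean partial derivatives d/dx_{i+1}, i = 0,1,2 *)
Definition pd (i : nat) (f : pt -> R) (x : pt) : R :=
  match i with
  | 0 => derive1 (fun t => f (t, x2 x, x3 x)) (x1 x)
  | 1 => derive1 (fun t => f (x1 x, t, x3 x)) (x2 x)
  | _ => derive1 (fun t => f (x1 x, x2 x, t)) (x3 x)
  end.

Definition pd_exists (i : nat) (f : pt -> R) (x : pt) : Prop :=
  match i with
  | 0 => derivable (fun t => f (t, x2 x, x3 x)) (x1 x) 1
  | 1 => derivable (fun t => f (x1 x, t, x3 x)) (x2 x) 1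
  | _ => derivable (fun t => f (x1 x, x2 x, t)) (x3 x) 1
  end.

Definition C1_on (D : set pt) (f : pt -> R) : Prop :=
  forall x, D x -> {for x, continuous f} /\
    forall i : nat, (i < 3)%N -> pd_exists i f x /\ {for x, continuous (pd i f)}.

Definition C2_on (D : set pt) (f : pt -> R) : Prop :=
  C1_on D f /\ forall i : nat, (i < 3)%N -> C1_on D (pd i f).

(* vector fields: coordinate components w.r.t. d/dx1, d/dx2, d/dx3 *)
Definition vfield := pt -> nat -> R.

Definition vadd (V W : vfield) : vfield := fun x i => V x i + W x i.
Definition vscale (a : pt -> R) (V : vfield) : vfield := fun x i => a x * V x i.

Definition vder (V : vfield) (f : pt -> R) (x : pt) : R :=
  \sum_(i < 3) V x i * pd i f x.

Definition X1 : vfield := fun x i => match i with 0 => x1 x | _ => 0 end.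
Definition X2 : vfield :=
  fun x i => match i with 0 => 0 | 1 => x1 x | 2 => 1 | _ => 0 end.
Definition X3 : vfield := fun x i => match i with 1 => x1 x | _ => 0 end.
Definition X3t (L : R) : vfield := vscale (fun _ => (Num.sqrt L)^-1) X3.

(* covectors: omega1 = x1^-1 dx1, omega2 = dx3, omega = x1^-1 dx2 - dx3 *)
Definition om1 (x : pt) (i : nat) : R := match i with 0 => (x1 x)^-1 | _ => 0 end.
Definition om2 (x : pt) (i : nat) : R := match i with 2 => 1 | _ => 0 end.
Definition om (x : pt) (i : nat) : R :=
  match i with 1 => (x1 x)^-1 | 2 => -1 | _ => 0 end.

Definition gL (L : R) (x : pt) (i j : nat) : R :=
  om1 x i * om1 x j + om2 x i * om2 x j + L * (om x i * om x j).

Definition ginner (L : R) (x : pt) (v w : nat -> R) : R :=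
  \sum_(i < 3) \sum_(j < 3) gL L x i j * v i * w j.

Definition gmx (L : R) (x : pt) : 'M[R]_3 := \matrix_(i < 3, j < 3) gL L x i j.
Definition ginv (L : R) (x : pt) (k l : nat) : R :=
  let M := invmx (gmx L x) in
  match (insub k : option 'I_3), (insub l : option 'I_3) with
  | Some k', Some l' => M k' l'
  | _, _ => 0
  end.

Definition christoffel (L : R) (x : pt) (k i j : nat) : R :=
  2^-1 * \sum_(l < 3) ginv L x k l *
    (pd i (fun y => gL L y j l) x + pd j (fun y => gL L y i l) x
     - pd l (fun y => gL L y i j) x).

Definition nablaL (L : R) (V W : vfield) : vfield := fun x k =>
  \sum_(i < 3) V x i * pd i (fun y => W y k) x
  + \sum_(i < 3) \sum_(j < 3) christoffel L x k i j * V x i * W x j.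

Section Surface.
Variable u : pt -> R.
Variable L : R.

Definition pp : pt -> R := vder X1 u.
Definition qq : pt -> R := vder X2 u.
Definition rr : pt -> R := vder (X3t L) u.
Definition ll (x : pt) : R := Num.sqrt (pp x ^+ 2 + qq x ^+ 2).
Definition lL (x : pt) : R := Num.sqrt (pp x ^+ 2 + qq x ^+ 2 + rr x ^+ 2).
Definition pbar (x : pt) : R := pp x / ll x.
Definition qbar (x : pt) : R := qq x / ll x.
Definition pbarL (x : pt) : R := pp x / lL x.
Definition qbarL (x : pt) : R := qq x / lL x.
Definition rbarL (x : pt) : R := rr x / lL x.

Definition nuL : vfield :=
  vadd (vadd (vscale pbarL X1) (vscale qbarL X2)) (vscale rbarL (X3t L)).
Definition e1 : vfield := vadd (vscale qbar X1) (vscale (fun x => - pbar x) X2).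
Definition e2 : vfield :=
  vadd (vadd (vscale (fun x => rbarL x * pbar x) X1)
             (vscale (fun x => rbarL x * qbar x) X2))
       (vscale (fun x => - (ll x / lL x)) (X3t L)).

Definition meanH (x : pt) : R :=
  ginner L x (nablaL L e1 nuL x) (e1 x) + ginner L x (nablaL L e2 nuL x) (e2 x).
End Surface.

Definition surf (u : pt -> R) : set pt := [set x | G x /\ u x = 0].

Definition regular_surface (u : pt -> R) : Prop :=
  C2_on G u /\ compact (surf u) /\
  (forall x, surf u x -> exists i : nat, (i < 3)%N /\ pd i u x != 0).

End Defs.

(* Main.v *)
Require Import Defs.
From HB Require Import structures.
From mathcomp Require Import all_boot all_order all_algebra.
From mathcomp Require Import all_classical all_reals all_analysis.
From mathcomp Require Import ring lra.
Import Order.TTheory GRing.Theory Num.Theory.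
Import numFieldNormedType.Exports.
Local Open Scope classical_set_scope.
Local Open Scope ring_scope.

Set Implicit Arguments. Unset Strict Implicit. Unset Printing Implicit Defensive.

Section Line.
Variable R : realType.
Implicit Types (f g : pt R -> R) (x : pt R).

Definition line (i : nat) (x : pt R) (t : R) : pt R :=
  match i with 0 => (t, x2 x, x3 x) | 1 => (x1 x, t, x3 x) | _ => (x1 x, x2 x, t) end.
Definition cc (i : nat) (x : pt R) : R :=
  match i with 0 => x1 x | 1 => x2 x | _ => x3 x end.

Lemma pdE i f x : pd i f x = derive1 (fun t => f (line i x t)) (cc i x).
Proof. by case: i => [|[|i]]. Qed.

Lemma pd_existsE i f x : pd_exists i f x = derivable (fun t => f (line i x t)) (cc i x) 1.
Proof. by case: i => [|[|i]]. Qed.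

Lemma line_cc i x : line i x (cc i x) = x.
Proof. by case: x => [[a b] c]; case: i => [|[|i]]. Qed.

Definition HD i f x (d : R) := is_derive (cc i x) (1:R) (fun t => f (line i x t)) d.

Lemma HD_pd i f x d : HD i f x d -> pd i f x = d.
Proof. by move=> h; rewrite pdE derive1E; apply: derive_val. Qed.

Lemma pd_HD i f x : pd_exists i f x -> HD i f x (pd i f x).
Proof. by rewrite pd_existsE pdE derive1E => h; apply: derivableP. Qed.

Lemma HD_add i f g x df dg : HD i f x df -> HD i g x dg ->
  HD i (fun y => f y + g y) x (df + dg).
Proof. move=> h1 h2; exact: is_deriveD. Qed.

Lemma HD_opp i f x df : HD i f x df -> HD i (fun y => - f y) x (- df).
Proof. move=> h1; exact: is_deriveN. Qed.

Lemma HD_mul i f g x df dg : HD i f x df -> HD i g x dg ->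
  HD i (fun y => f y * g y) x (f x * dg + g x * df).
Proof. move=> h1 h2; have := is_deriveM h1 h2; by rewrite line_cc. Qed.

Lemma HD_cst i x (k : R) : HD i (fun _ => k) x 0.
Proof. exact: is_derive_cst. Qed.

Lemma HD_inv i f x df : f x != 0 -> HD i f x df ->
  HD i (fun y => (f y)^-1) x (- df / (f x) ^+ 2).
Proof.
move=> fx h1; rewrite /HD.
have fx' : (fun t => f (line i x t)) (cc i x) != 0 by rewrite /= line_cc.
apply: DeriveDef; first by apply: derivableV => //; case: h1.
rewrite deriveV //; last by case: h1.
rewrite (@derive_val _ _ _ _ _ _ _ h1) /= line_cc /GRing.scale /=.
by rewrite mulNr mulrC -mulNr.
Qed.

Lemma HD_sqrt i f x df : 0 < f x -> HD i f x df ->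
  HD i (fun y => Num.sqrt (f y)) x (df / (2 * Num.sqrt (f x))).
Proof.
move=> fx h1; rewrite /HD.
have dF : derivable (fun t => f (line i x t)) (cc i x) 1 by case: h1.
have fx' : 0 < (fun t => f (line i x t)) (cc i x) by rewrite /= line_cc.
have dS : derivable Num.sqrt ((fun t => f (line i x t)) (cc i x)) 1.
  by case: (is_derive1_sqrt fx').
apply: DeriveDef.
  apply/derivable1_diffP.
  apply: (differentiable_comp (f := fun t => f (line i x t)) (g := Num.sqrt)).
  exact/derivable1_diffP. exact/derivable1_diffP.
have := derive1_comp dF dS.
rewrite /comp !derive1E => ->.
rewrite (@derive_val _ _ _ _ _ _ _ (is_derive1_sqrt fx')) (@derive_val _ _ _ _ _ _ _ h1) /= line_cc.
by rewrite mulrC.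
Qed.

Lemma HD_x1 i x : HD i (fun y => x1 y) x (if i is 0 then 1 else 0).
Proof.
rewrite /HD; case: i => [|[|i]] /=.
- exact: is_derive_id.
- exact: is_derive_cst.
- exact: is_derive_cst.
Qed.

Lemma HD_ext i x (f g : pt R -> R) d : (forall y, f y = g y) -> HD i f x d -> HD i g x d.
Proof. by move=> e; have -> : f = g by apply/funext. Qed.

Lemma HD_eq i x (f : pt R -> R) d d' : HD i f x d -> d = d' -> HD i f x d'.
Proof. by move=> h <-. Qed.

End Line.

Section Metric.
Variable R : realType.
Variable L : R.
Variable x : pt R.
Hypothesis L0 : L != 0.
Hypothesis a0 : x1 x != 0.

Definition Ginv (k l : nat) : R :=
  let a := x1 x in
  match k, l with
  | 0, 0 => a ^+ 2
  | 1, 1 => a ^+ 2 * (1 + L^-1)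
  | 1, 2 => a
  | 2, 1 => a
  | 2, 2 => 1
  | _, _ => 0
  end.

Lemma gmx_inv : invmx (gmx L x) = \matrix_(i < 3, j < 3) Ginv i j.
Proof.
have h : gmx L x *m (\matrix_(i < 3, j < 3) Ginv i j) = 1%:M.
  apply/matrixP => i j; rewrite !mxE !big_ord_recl big_ord0 !mxE /=.
  rewrite /gL /om1 /om2 /om /Ginv /=.
  case: i => [[|[|[|i]]] Hi] //=; case: j => [[|[|[|j]]] Hj] //=; field; by rewrite ?a0 ?L0.
have [hu _] := mulmx1_unit h.
by rewrite -[RHS](mulKmx hu) h mulmx1.
Qed.

Lemma ginv_E k l : ginv L x k l = Ginv k l.
Proof.
rewrite /ginv gmx_inv.
case: (@insubP _ _ 'I_3 k) => [k' _ <-|Hk]; case: (@insubP _ _ 'I_3 l) => [l' _ <-|Hl]; rewrite ?mxE //.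
- by case: (val k') => [|[|[|?]]]; case: l Hl => [|[|[|?]]].
- by case: (val l') => [|[|[|?]]]; case: k Hk => [|[|[|?]]].
- by case: l Hl => [|[|[|?]]]; case: k Hk => [|[|[|?]]].
Qed.



Definition dl (m : nat) : R := if m is 0 then 1 else 0.
Definition d1 (j : nat) : R := if j is 0 then - (x1 x)^-2 else 0.
Definition dw (j : nat) : R := if j is 1 then - (x1 x)^-2 else 0.

Lemma HD_om1 m j : HD m (fun y => om1 y j) x (dl m * d1 j).
Proof.
case: j => [|j] /=.
  apply: HD_eq; first exact: (HD_inv a0 (HD_x1 m x)).
  by rewrite /dl /d1; case: m => [|[|m]] /=; field.
apply: HD_eq; first exact: (HD_cst m x 0).
by rewrite /d1 mulr0.
Qed.

Lemma HD_om2 m j : HD m (fun y => om2 y j) x 0.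
Proof. exact: (HD_cst m x (om2 x j)). Qed.

Lemma HD_om m j : HD m (fun y => om y j) x (dl m * dw j).
Proof.
case: j => [|[|[|j]]] /=.
- by apply: HD_eq; [exact: (HD_cst m x 0)|rewrite /dw mulr0].
- apply: HD_eq; first exact: (HD_inv a0 (HD_x1 m x)).
  by rewrite /dl /dw; case: m => [|[|m]] /=; field.
- by apply: HD_eq; [exact: (HD_cst m x (-1))|rewrite /dw mulr0].
- by apply: HD_eq; [exact: (HD_cst m x 0)|rewrite /dw mulr0].
Qed.

Lemma dg_E m j l : pd m (fun y => gL L y j l) x =
  dl m * (om1 x j * d1 l + om1 x l * d1 j + L * (om x j * dw l + om x l * dw j)).
Proof.
apply: HD_pd.
apply: HD_eq.
  apply: HD_add; first apply: HD_add.
  - exact: HD_mul (HD_om1 m j) (HD_om1 m l).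
  - exact: HD_mul (HD_om2 m j) (HD_om2 m l).
  - exact: HD_mul (HD_cst m x L) (HD_mul (HD_om m j) (HD_om m l)).
cbv beta; ring.
Qed.

Definition Gam (k i j : nat) : R :=
  let a := x1 x in
  match k, i, j with
  | 0, 0, 0 => - a^-1
  | 0, 1, 1 => L / a
  | 0, 1, 2 => - L / 2
  | 0, 2, 1 => - L / 2
  | 1, 0, 1 => - (L + 2) / (2 * a)
  | 1, 1, 0 => - (L + 2) / (2 * a)
  | 1, 0, 2 => (L + 1) / 2
  | 1, 2, 0 => (L + 1) / 2
  | 2, 0, 1 => - L / (2 * a ^+ 2)
  | 2, 1, 0 => - L / (2 * a ^+ 2)
  | 2, 0, 2 => L / (2 * a)
  | 2, 2, 0 => L / (2 * a)
  | _, _, _ => 0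
  end.

Lemma chr_E k i j : (k < 3)%N -> (i < 3)%N -> (j < 3)%N ->
  christoffel L x k i j = Gam k i j.
Proof.
move=> hk hi hj; rewrite /christoffel !big_ord_recl big_ord0 !ginv_E !dg_E /=.
rewrite /Ginv /Gam /dl /d1 /dw /om1 /om.
have := a0; move: (x1 x) => a ha.
case: k hk => [|[|[|k]]] // _; case: i hi => [|[|[|i]]] // _; case: j hj => [|[|[|j]]] // _ /=;
  field.
all: by rewrite ?ha ?L0.
Qed.

End Metric.

Section Surf.
Variable R : realType.
Variable u : pt R -> R.

Lemma pp_E y : pp u y = x1 y * pd 0 u y.
Proof. by rewrite /pp /vder !big_ord_recl big_ord0 /=; ring. Qed.

Lemma qq_E y : qq u y = x1 y * pd 1 u y + pd 2 u y.
Proof. by rewrite /qq /vder !big_ord_recl big_ord0 /=; ring. Qed.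

Lemma rr_E L y : rr u L y = (Num.sqrt L)^-1 * (x1 y * pd 1 u y).
Proof. by rewrite /rr /vder /X3t /vscale !big_ord_recl big_ord0 /=; ring. Qed.

End Surf.

Section Deriv.
Variable R : realType.
Variable u : pt R -> R.
Variable x : pt R.
Variable L : R.
Hypothesis hD : forall i j, (j < 3)%N -> pd_exists i (pd j u) x.

Let a := x1 x.
Let U j := pd j u x.
Let D i j := pd i (pd j u) x.
Let s := (Num.sqrt L)^-1.

Lemma HD_U i j : (j < 3)%N -> HD i (pd j u) x (D i j).
Proof. by move=> hj; apply: pd_HD; apply: hD. Qed.

Lemma HD_sq i (f : pt R -> R) df : HD i f x df -> HD i (fun y => f y ^+ 2) x (2 * f x * df).
Proof.
move=> h; apply: (@HD_ext _ _ _ (fun y => f y * f y)); first by move=> y; rewrite -expr2.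
by apply: HD_eq; [exact: (HD_mul h h)| cbv beta; ring].
Qed.

Definition dpp i := a * D i 0 + U 0 * dl R i.
Definition dqq i := a * D i 1 + U 1 * dl R i + D i 2.
Definition drr i := s * (a * D i 1 + U 1 * dl R i).

Lemma HD_x1' i : HD i (fun y => x1 y) x (dl R i).
Proof. by apply: HD_eq; [exact: HD_x1|case: i]. Qed.

Lemma HD_pp i : HD i (pp u) x (dpp i).
Proof.
apply: (@HD_ext _ _ _ (fun y => x1 y * pd 0 u y)); first by move=> y; rewrite -pp_E.
by apply: HD_eq; [exact: (HD_mul (HD_x1' i) (HD_U i (isT : (0 < 3)%N)))|by []].
Qed.

Lemma HD_qq i : HD i (qq u) x (dqq i).
Proof.
apply: (@HD_ext _ _ _ (fun y => x1 y * pd 1 u y + pd 2 u y)); first by move=> y; rewrite -qq_E.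
apply: HD_eq.
  exact: (HD_add (HD_mul (HD_x1' i) (HD_U i (isT : (1 < 3)%N))) (HD_U i (isT : (2 < 3)%N))).
by [].
Qed.

Lemma HD_rr i : HD i (rr u L) x (drr i).
Proof.
apply: (@HD_ext _ _ _ (fun y => s * (x1 y * pd 1 u y))); first by move=> y; rewrite -rr_E.
apply: HD_eq.
  exact: (HD_mul (HD_cst i x s) (HD_mul (HD_x1' i) (HD_U i (isT : (1 < 3)%N)))).
cbv beta; rewrite /drr /D /U /a /s.
move: (pd i (pd 1 u) x) (pd 1 u x) => A B; ring.
Qed.

Hypothesis hl : ll u x != 0.

Lemma l2_gt0 : 0 < pp u x ^+ 2 + qq u x ^+ 2.
Proof.
have h0 : 0 <= pp u x ^+ 2 + qq u x ^+ 2 by rewrite addr_ge0 // sqr_ge0.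
rewrite lt_neqAle h0 andbT; apply/eqP => e; move: hl; rewrite /ll -e sqrtr0.
by rewrite eqxx.
Qed.

Lemma lL2_gt0 : 0 < pp u x ^+ 2 + qq u x ^+ 2 + rr u L x ^+ 2.
Proof. by apply: (lt_le_trans l2_gt0); rewrite lerDl sqr_ge0. Qed.

Lemma lL_gt0 : 0 < lL u L x.
Proof. by rewrite /lL sqrtr_gt0 lL2_gt0. Qed.

Lemma ll_gt0 : 0 < ll u x.
Proof. by rewrite /ll sqrtr_gt0 l2_gt0. Qed.

Definition dlL i := (2 * pp u x * dpp i + 2 * qq u x * dqq i + 2 * rr u L x * drr i) / (2 * lL u L x).
Definition dll i := (2 * pp u x * dpp i + 2 * qq u x * dqq i) / (2 * ll u x).

Lemma HD_lL i : HD i (lL u L) x (dlL i).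
Proof.
apply: (@HD_ext _ _ _ (fun y => Num.sqrt (pp u y ^+ 2 + qq u y ^+ 2 + rr u L y ^+ 2))) => //.
apply: HD_eq.
  apply: (HD_sqrt lL2_gt0).
  apply: HD_add; first apply: HD_add.
  - exact: (HD_sq (HD_pp i)).
  - exact: (HD_sq (HD_qq i)).
  - exact: (HD_sq (HD_rr i)).
by [].
Qed.

Lemma HD_ll i : HD i (ll u) x (dll i).
Proof.
apply: (@HD_ext _ _ _ (fun y => Num.sqrt (pp u y ^+ 2 + qq u y ^+ 2))) => //.
apply: HD_eq.
  apply: (HD_sqrt l2_gt0).
  apply: HD_add.
  - exact: (HD_sq (HD_pp i)).
  - exact: (HD_sq (HD_qq i)).
by [].
Qed.

Definition dquot (f df g dg : R) := (f * (- dg / g ^+ 2) + g^-1 * df).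

Lemma HD_quot i (f g : pt R -> R) df dg : g x != 0 -> HD i f x df -> HD i g x dg ->
  HD i (fun y => f y / g y) x (dquot (f x) df (g x) dg).
Proof. by move=> g0 hf hg; exact: HD_mul hf (HD_inv g0 hg). Qed.

Lemma HD_pbarL i : HD i (pbarL u L) x (dquot (pp u x) (dpp i) (lL u L x) (dlL i)).
Proof. exact: HD_quot (lt0r_neq0 lL_gt0) (HD_pp i) (HD_lL i). Qed.
Lemma HD_qbarL i : HD i (qbarL u L) x (dquot (qq u x) (dqq i) (lL u L x) (dlL i)).
Proof. exact: HD_quot (lt0r_neq0 lL_gt0) (HD_qq i) (HD_lL i). Qed.
Lemma HD_rbarL i : HD i (rbarL u L) x (dquot (rr u L x) (drr i) (lL u L x) (dlL i)).
Proof. exact: HD_quot (lt0r_neq0 lL_gt0) (HD_rr i) (HD_lL i). Qed.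
Lemma HD_pbar i : HD i (pbar u) x (dquot (pp u x) (dpp i) (ll u x) (dll i)).
Proof. exact: HD_quot hl (HD_pp i) (HD_ll i). Qed.
Lemma HD_qbar i : HD i (qbar u) x (dquot (qq u x) (dqq i) (ll u x) (dll i)).
Proof. exact: HD_quot hl (HD_qq i) (HD_ll i). Qed.

End Deriv.

Definition Nv {R : realType} (dP dQ dR : nat -> R) (a P Q Rr s : R) (i k : nat) : R :=
  match k with
  | 0 => P * dl R i + a * dP i
  | 1 => Q * dl R i + a * dQ i + (Rr * (s * dl R i) + s * a * dR i)
  | _ => dQ i
  end.

Definition PsiA {R : realType} (a s P Q Rr pb qb lam : R) (dP dQ dR : nat -> R) : R :=
  let f1 (k : nat) := match k with 0 => qb | 1 => - pb | _ => 0 end in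
  let f2 (k : nat) := match k with 0 => Rr * pb | 1 => Rr * qb | _ => - lam end in
  let Pf (i k : nat) := f1 i * f1 k + f2 i * f2 k in
  let dn (k i : nat) := match k with 0 => dP i | 1 => dQ i | _ => dR i end in
  let E (i k : nat) := match i with 0 => a * dn k 0%N | 1 => a * dn k 1%N + dn k 2%N | _ => s * a * dn k 1%N end in
  (Pf 0%N 0%N * E 0%N 0%N + Pf 0%N 1%N * E 0%N 1%N + Pf 0%N 2%N * E 0%N 2%N) +
  (Pf 1%N 0%N * E 1%N 0%N + Pf 1%N 1%N * E 1%N 1%N + Pf 1%N 2%N * E 1%N 2%N) +
  (Pf 2%N 0%N * E 2%N 0%N + Pf 2%N 1%N * E 2%N 1%N + Pf 2%N 2%N * E 2%N 2%N) + Pf 2%N 0%N * Rr - Pf 2%N 2%N * P.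

Definition PsiS {R : realType} (a s p q r l m : R) (dP dQ dR : nat -> R) : R :=
  PsiA a s (p / m) (q / m) (r / m) (p / l) (q / l) (l / m) dP dQ dR.

Section Ident.
Variable R : realType.
Variable u : pt R -> R.
Variable x : pt R.
Variable c : R.
Hypothesis hc : 0 < c.
Hypothesis ha : 0 < x1 x.
Hypothesis hD : forall i j, (j < 3)%N -> pd_exists i (pd j u) x.
Hypothesis hl : ll u x != 0.

Lemma sqc : Num.sqrt (c ^+ 2) = c.
Proof. by rewrite sqrtr_sqr gtr0_norm. Qed.

Let L := c ^+ 2.
Let dP := fun i => pd i (pbarL u L) x.
Let dQ := fun i => pd i (qbarL u L) x.
Let dR := fun i => pd i (rbarL u L) x.

Lemma HD_P i : HD i (pbarL u L) x (dP i).
Proof. have h := HD_pbarL L hD hl i; by rewrite /dP (HD_pd h). Qed.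
Lemma HD_Q i : HD i (qbarL u L) x (dQ i).
Proof. have h := HD_qbarL L hD hl i; by rewrite /dQ (HD_pd h). Qed.
Lemma HD_R i : HD i (rbarL u L) x (dR i).
Proof. have h := HD_rbarL L hD hl i; by rewrite /dR (HD_pd h). Qed.

Lemma N_E (i k : nat) : (k < 3)%N -> pd i (fun y => nuL u L y k) x =
  Nv dP dQ dR (x1 x) (pbarL u L x) (qbarL u L x) (rbarL u L x) c^-1 i k.
Proof.
move=> hk; apply: HD_pd.
case: k hk => [|[|[|k]]] // _.
- apply: (@HD_ext _ _ _ (fun y => pbarL u L y * x1 y)).
    move=> y; rewrite /nuL /vadd /X1 /X2 /X3t /X3 /vscale /=.
    move: (pbarL u L y) (qbarL u L y) (rbarL u L y) => P Q Rr; ring.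
  exact: (HD_mul (HD_P i) (HD_x1' x i)).
- apply: (@HD_ext _ _ _ (fun y => qbarL u L y * x1 y + rbarL u L y * (c^-1 * x1 y))).
    move=> y; rewrite /nuL /vadd /X1 /X2 /X3t /X3 /vscale /L sqc /=.
    move: (pbarL _ _ y) (qbarL _ _ y) (rbarL _ _ y) => P Q Rr; ring.
  apply: HD_eq.
    exact: (HD_add (HD_mul (HD_Q i) (HD_x1' x i)) (HD_mul (HD_R i) (HD_mul (HD_cst i x c^-1) (HD_x1' x i)))).
  rewrite /Nv; cbv beta; move: (dQ i) (dR i) (qbarL u L x) (rbarL u L x) (x1 x) => A B C D E; ring.
- apply: (@HD_ext _ _ _ (fun y => qbarL u L y)).
    move=> y; rewrite /nuL /vadd /X1 /X2 /X3t /X3 /vscale /=.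
    move: (pbarL u L y) (qbarL u L y) (rbarL u L y) => P Q Rr; ring.
  exact: (HD_Q i).
Qed.


Definition Psi2 {R : realType} (a c P Q Rr pb qb lam : R) (dP dQ dR : nat -> R) : R :=
  let s := c^-1 in
  let f1 (k : nat) := match k with 0 => qb | 1 => - pb | _ => 0 end in
  let f2 (k : nat) := match k with 0 => Rr * pb | 1 => Rr * qb | _ => - lam end in
  let Pf (i k : nat) := f1 i * f1 k + f2 i * f2 k in
  let dn (k i : nat) := match k with 0 => dP i | 1 => dQ i | _ => dR i end in
  let E (i k : nat) := match i with 0 => a * dn k 0 | 1 => a * dn k 1 + dn k 2 | _ => s * a * dn k 1 end in
  (Pf 0 0 * E 0 0 + Pf 0 1 * E 0 1 + Pf 0 2 * E 0 2) +
  (Pf 1 0 * E 1 0 + Pf 1 1 * E 1 1 + Pf 1 2 * E 1 2) +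
  (Pf 2 0 * E 2 0 + Pf 2 1 * E 2 1 + Pf 2 2 * E 2 2) + Pf 2 0 * Rr - Pf 2 2 * P
  + c * (Pf 0 2 * Q - Pf 1 2 * P).

Definition FQ {R : realType} (a c P Q Rr : R) (dP dQ dR : nat -> R) (f : nat -> R) : R :=
  let s := c^-1 in
  let dn (k i : nat) := match k with 0 => dP i | 1 => dQ i | _ => dR i end in
  let E (i k : nat) := match i with 0 => a * dn k 0%N | 1 => a * dn k 1%N + dn k 2%N | _ => s * a * dn k 1%N end in
  let T (i k : nat) := match i, k with
     | 0, 2 => Q * c / 2 | 0, 1 => - (Rr * c / 2) | 1, 2 => - (P * c / 2) | 1, 0 => Rr * c / 2
     | 2, 1 => - (P * c / 2) | 2, 0 => Q * c / 2 + Rr | 2, 2 => - P | _, _ => 0 end in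
  let M (i k : nat) := E i k + T i k in
  f 0%N * (f 0%N * M 0%N 0%N + f 1%N * M 0%N 1%N + f 2%N * M 0%N 2%N) +
  f 1%N * (f 0%N * M 1%N 0%N + f 1%N * M 1%N 1%N + f 2%N * M 1%N 2%N) +
  f 2%N * (f 0%N * M 2%N 0%N + f 1%N * M 2%N 1%N + f 2%N * M 2%N 2%N).

Lemma one_term (V : vfield R) (f : nat -> R) :
  V x 0%N = x1 x * f 0%N -> V x 1%N = x1 x * f 1%N + c^-1 * x1 x * f 2%N -> V x 2%N = f 1%N ->
  ginner L x (nablaL L V (nuL u L) x) (V x) =
  FQ (x1 x) c (pbarL u L x) (qbarL u L x) (rbarL u L x) dP dQ dR f.
Proof.
move=> hV0 hV1 hV2.
have c0 : c != 0 by rewrite gt_eqF.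
have L0 : L != 0 by rewrite /L expf_neq0 // gt_eqF.
have a0 : x1 x != 0 by rewrite gt_eqF.
rewrite /ginner /nablaL.
rewrite !big_ord_recl !big_ord0.
rewrite !(chr_E L0 a0) //.
rewrite !N_E //.
rewrite /Gam /Nv /gL /om1 /om2 /om /nuL /vadd /X1 /X2 /X3t /X3 /vscale.
rewrite /L sqc.
rewrite /FQ.
clearbody dP dQ dR.
move: a0 hV0 hV1 hV2; move: (x1 x) (pbarL u _ x) (qbarL u _ x) (rbarL u _ x) => a P Q Rr a0 hV0 hV1 hV2.
have o0 : nat_of_ord (@ord0 2) = 0%N by [].
have o1 : nat_of_ord (lift (@ord0 2) (@ord0 1)) = 1%N by [].
have o2 : nat_of_ord (lift (@ord0 2) (lift (@ord0 1) (@ord0 0))) = 2%N by [].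
rewrite ?o0 ?o1 ?o2.
cbv beta iota zeta.
rewrite /dl; cbv beta iota.
rewrite hV0 hV1 hV2.

move: (f 0%N) (f 1%N) (f 2%N) (dP 0%N) (dP 1%N) (dP 2%N) (dQ 0%N) (dQ 1%N) (dQ 2%N) (dR 0%N) (dR 1%N) (dR 2%N) => f0 f1 f2 p0 p1 p2 q0 q1 q2 r0 r1 r2.

abstract (field; rewrite ?a0 ?c0 //).
Qed.

Lemma meanH_E : meanH u L x =
  PsiS (x1 x) c^-1 (pp u x) (qq u x) (rr u L x) (ll u x) (lL u L x) dP dQ dR.
Proof.
have a0 : x1 x != 0 by rewrite gt_eqF.
have m0 : lL u L x != 0 by rewrite gt_eqF // lL_gt0.
have c0 : c != 0 by rewrite gt_eqF.
rewrite /meanH.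
rewrite (@one_term (e1 u) (fun k => match k with 0 => qbar u x | 1 => - pbar u x | _ => 0 end)); first last.
- by rewrite /e1 /vadd /vscale /X1 /X2 /=; move: (pbar u x) (qbar u x) => A B; ring.
- by rewrite /e1 /vadd /vscale /X1 /X2 /=; move: (pbar u x) (qbar u x) (x1 x) => A B C; ring.
- by rewrite /e1 /vadd /vscale /X1 /X2 /=; move: (pbar u x) (qbar u x) (x1 x) => A B C; ring.
rewrite (@one_term (e2 u L) (fun k => match k with 0 => rbarL u L x * pbar u x | 1 => rbarL u L x * qbar u x | _ => - (ll u x / lL u L x) end)); first last.
- by rewrite /e2 /vadd /X1 /X2 /X3t /X3 /vscale /=; move: (pbar u x) (qbar u x) (rbarL u L x) (ll u x / lL u L x) => A B C D; ring.
- rewrite /e2 /vadd /X1 /X2 /X3t /X3 /vscale /L sqc /=.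
  by move: (pbar u x) (qbar u x) (rbarL u _ x) (ll u x / lL u _ x) (x1 x) => A B C D E; ring.
- by rewrite /e2 /vadd /X1 /X2 /X3t /X3 /vscale /=; move: (pbar u x) (qbar u x) (rbarL u L x) (ll u x / lL u L x) (x1 x) => A B C D E; ring.
rewrite /PsiS -/(pbar u x) -/(qbar u x) -/(pbarL u L x) -/(qbarL u L x) -/(rbarL u L x).
have hc2 : qbar u x * pbarL u L x - pbar u x * qbarL u L x = 0.
  by rewrite /pbar /qbar /pbarL /qbarL; move: (pp u x) (qq u x) (ll u x) (lL u L x) => A B C D; ring.
move: hc2.
clearbody dP dQ dR.
move: (x1 x) (pbarL u L x) (qbarL u L x) (rbarL u L x) (pbar u x) (qbar u x) (ll u x / lL u L x) => a P Q Rr pb qb lam hc2.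
rewrite /FQ /PsiA; cbv beta iota zeta.
move: (dP 0%N) (dP 1%N) (dP 2%N) (dQ 0%N) (dQ 1%N) (dQ 2%N) (dR 0%N) (dR 1%N) (dR 2%N) => p0 p1 p2 q0 q1 q2 r0 r1 r2.
apply/eqP; rewrite -subr_eq0; apply/eqP.
transitivity (c * Rr * lam * (qb * P - pb * Q)); first by field.
by rewrite hc2 mulr0.
Qed.

End Ident.

Section Cvg.
Variable R : realType.
Variable F : set_system R.
Hypothesis FF : Filter F.

Lemma cvgC' (k : R) : (fun _ : R => k) @ F --> k.
Proof. exact: cvg_cst. Qed.
Lemma cvgD' (f g : R -> R) (a b : R) : f @ F --> a -> g @ F --> b -> (fun t => f t + g t) @ F --> a + b.
Proof. move=> hf hg; exact: cvgD hf hg. Qed.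
Lemma cvgM' (f g : R -> R) (a b : R) : f @ F --> a -> g @ F --> b -> (fun t => f t * g t) @ F --> a * b.
Proof. move=> hf hg; exact: cvgM hf hg. Qed.
Lemma cvgN' (f : R -> R) (a : R) : f @ F --> a -> (fun t => - f t) @ F --> - a.
Proof. move=> hf; exact: cvgN hf. Qed.
Lemma cvgV' (f : R -> R) (a : R) : a != 0 -> f @ F --> a -> (fun t => (f t)^-1) @ F --> a^-1.
Proof. move=> a0 hf; exact: cvgV a0 hf. Qed.
Lemma cvgX2' (f : R -> R) (a : R) : f @ F --> a -> (fun t => f t ^+ 2) @ F --> a ^+ 2.
Proof.
move=> hf; have := cvgM' hf hf; rewrite expr2.
by apply: cvg_trans; apply: near_eq_cvg; near=> t; rewrite expr2.
Unshelve. all: by end_near.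
Qed.
Lemma cvgS' (f : R -> R) (a : R) : f @ F --> a -> (fun t => Num.sqrt (f t)) @ F --> Num.sqrt a.
Proof. move=> hf; exact: (continuous_cvg _ (@sqrt_continuous R a) hf). Qed.

End Cvg.

Ltac cvt1 := lazymatch goal with
 | |- (fun t => @?f t + @?g t) @ _ --> _ => apply: cvgD'
 | |- (fun t => @?f t * @?g t) @ _ --> _ => apply: cvgM'
 | |- (fun t => - @?f t) @ _ --> _ => apply: cvgN'
 | |- (fun t => (@?f t)^-1) @ _ --> _ => apply: cvgV'; [by rewrite ?mulf_neq0 ?expf_neq0 ?pnatr_eq0 //|]
 | |- (fun t => (@?f t) ^+ 2) @ _ --> _ => apply: cvgX2'
 | |- (fun t => Num.sqrt (@?f t)) @ _ --> _ => apply: cvgS'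
 | |- _ => first [assumption | apply: cvgC']
 end.
Ltac cvt := repeat cvt1.

Section Gen.
Variable R : realType.
Variable F : set_system R.
Hypothesis FF : Filter F.

Definition dlLg (p q : R) (dpp dqq Cr : nat -> R) (r m s : R) (i : nat) :=
  (2 * p * dpp i + 2 * q * dqq i + 2 * r * (s * Cr i)) / (2 * m).

Definition PsiG (a p q l : R) (dpp dqq Cr : nat -> R) (s r m : R) :=
  PsiS a s p q r l m
    (fun i => dquot p (dpp i) m (dlLg p q dpp dqq Cr r m s i))
    (fun i => dquot q (dqq i) m (dlLg p q dpp dqq Cr r m s i))
    (fun i => dquot r (s * Cr i) m (dlLg p q dpp dqq Cr r m s i)).

Lemma PsiG_cvg a p q l dpp dqq Cr (sF rF mF : R -> R) s0 r0 m0 :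
  m0 != 0 -> l != 0 -> sF @ F --> s0 -> rF @ F --> r0 -> mF @ F --> m0 ->
  (fun L => PsiG a p q l dpp dqq Cr (sF L) (rF L) (mF L)) @ F -->
  PsiG a p q l dpp dqq Cr s0 r0 m0.
Proof.
move=> m00 l0 hs hr hm.
rewrite /PsiG /PsiS /PsiA /dquot /dlLg; cbv beta iota zeta.
cvt.
Qed.

End Gen.

Lemma s_cvg (R : realType) : (fun L : R => (Num.sqrt L)^-1) @ +oo --> (0:R).
Proof.
apply/cvgr0Pnorm_lt => e e0.
near=> L.
have hL : e^-2 < L by near: L; apply: nbhs_pinfty_gt; rewrite num_real.
have Lp : 0 < L by apply: lt_trans hL; rewrite invr_gt0 exprn_gt0.
rewrite normfV ger0_norm ?sqrtr_ge0 //.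
rewrite -[e in _ < e]invrK ltf_pV2 ?posrE ?sqrtr_gt0 ?invr_gt0 //.
have : Num.sqrt (e^-1 ^+ 2) < Num.sqrt L by rewrite ltr_sqrt // exprVn.
by rewrite sqrtr_sqr gtr0_norm // invr_gt0.
Unshelve. all: by end_near.
Qed.

Section Main.
Variable R : realType.
Variable u : pt R -> R.
Variable x : pt R.
Hypothesis ha : 0 < x1 x.
Hypothesis hD : forall i j, (j < 3)%N -> pd_exists i (pd j u) x.
Hypothesis hl : ll u x != 0.

Let Cr (i : nat) : R := x1 x * pd i (pd 1 u) x + pd 1 u x * dl R i.

Lemma meanH_G (L : R) : 0 < L ->
  meanH u L x = PsiG (x1 x) (pp u x) (qq u x) (ll u x) (dpp u x) (dqq u x) Cr
    (Num.sqrt L)^-1 (rr u L x) (lL u L x).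
Proof.
move=> hL.
have hc : 0 < Num.sqrt L by rewrite sqrtr_gt0.
have := meanH_E hc ha hD hl.
rewrite sqr_sqrtr ?ltW // => ->.
rewrite /PsiG; congr (PsiS _ _ _ _ _ _ _ _ _ _); apply: funext => i.
- exact: (HD_pd (HD_pbarL L hD hl i)).
- exact: (HD_pd (HD_qbarL L hD hl i)).
- exact: (HD_pd (HD_rbarL L hD hl i)).
Qed.

Lemma rr_cvg : (fun L => rr u L x) @ +oo --> (0:R).
Proof.
have -> : (fun L => rr u L x) = (fun L => (Num.sqrt L)^-1 * (x1 x * pd 1 u x)).
  by apply: funext => L; rewrite rr_E.
have hs := @s_cvg R.
have h : (fun L => (Num.sqrt L)^-1 * (x1 x * pd 1 u x)) @ +oo --> 0 * (x1 x * pd 1 u x) by cvt.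
by rewrite mul0r in h.
Qed.

Lemma lL_cvg : (fun L => lL u L x) @ +oo --> ll u x.
Proof.
have hr := rr_cvg.
have h : (fun L => lL u L x) @ +oo --> Num.sqrt (pp u x ^+ 2 + qq u x ^+ 2 + 0 ^+ 2).
  by rewrite /lL; cvt.
by rewrite expr0n /= addr0 in h.
Qed.

Lemma target_E :
  vder (@X1 R) (pbar u) x + vder (@X2 R) (qbar u) x - pbar u x =
  PsiG (x1 x) (pp u x) (qq u x) (ll u x) (dpp u x) (dqq u x) Cr 0 0 (ll u x).
Proof.
rewrite /vder !big_ord_recl !big_ord0.
have o0 : nat_of_ord (@ord0 2) = 0%N by [].
have o1 : nat_of_ord (lift (@ord0 2) (@ord0 1)) = 1%N by [].
have o2 : nat_of_ord (lift (@ord0 2) (lift (@ord0 1) (@ord0 0))) = 2%N by [].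
rewrite ?o0 ?o1 ?o2 /X1 /X2; cbv beta iota.
rewrite (HD_pd (HD_pbar hD hl 0)) (HD_pd (HD_qbar hD hl 1)) (HD_pd (HD_qbar hD hl 2)).
move: (pd 1 (pbar u) x) (pd 2 (pbar u) x) (pd 0 (qbar u) x) => z1 z2 z3.
rewrite /PsiG /PsiS /PsiA /dquot /dlLg /dll /pbar; cbv beta iota zeta.
have e2 : ll u x ^+ 2 = pp u x ^+ 2 + qq u x ^+ 2.
  by rewrite /ll sqr_sqrtr // addr_ge0 // sqr_ge0.
move: (Cr 0%N) (Cr 1%N) (Cr 2%N) => c0 c1 c2.
move: (dpp u x 0%N) (dpp u x 1%N) (dpp u x 2%N) (dqq u x 0%N) (dqq u x 1%N) (dqq u x 2%N) => d0 d1 d2 g0 g1 g2.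
move: e2 hl (dpp u x) (dqq u x) => e2 l0 _ _.
move: e2 l0; move: (x1 x) (pp u x) (qq u x) (ll u x) => a p q l e2 l0.
have [pb hp] : exists pb, p = pb * l.
  by exists (p / l); rewrite divfK.
have [qb hq] : exists qb, q = qb * l by exists (q / l); rewrite divfK.
subst p q.
have hr : pb ^+ 2 + qb ^+ 2 = 1.
  apply: (mulIf (expf_neq0 2 l0)); rewrite mul1r [RHS]e2; ring.
apply/eqP; rewrite -subr_eq0; apply/eqP.
pose dl0 := pb * d0 + qb * g0. pose dl1 := pb * d1 + qb * g1. pose dl2 := pb * d2 + qb * g2.
transitivity ((1 - (pb ^+ 2 + qb ^+ 2)) *
  (pb * a * dl0 / l + qb * a * dl1 / l + qb * dl2 / l + a * ((d0 - pb * dl0) / l)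
   + (a * ((g1 - qb * dl1) / l) + (g2 - qb * dl2) / l))).
  rewrite /dl0 /dl1 /dl2; field; done.
by rewrite hr subrr mul0r.
Qed.

End Main.


Unset Implicit Arguments.

Theorem proposition3p8 (R : realType) (u : pt R -> R) :
  regular_surface u ->
  forall x : pt R, surf u x -> ll u x != 0 ->
    (fun L : R => meanH u L x) @ +oo -->
      vder (@X1 R) (pbar u) x + vder (@X2 R) (qbar u) x - pbar u x.
Proof.
move=> [[_ hC2] _] x [Gx _] hl.
have ha : 0 < x1 x := Gx.
have hD : forall i j, (j < 3)%N -> pd_exists i (pd j u) x.
  move=> i j hj; have [_ h] := hC2 j hj x Gx.
  by case: i => [|[|i]]; [exact: (h 0%N isT).1|exact: (h 1%N isT).1|exact: (h 2%N isT).1].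
rewrite (target_E hD hl).
apply: cvg_trans; last first.
  apply: (@PsiG_cvg R (pinfty_nbhs R)).
  - exact: (lt0r_neq0 (ll_gt0 hl)).
  - exact: (lt0r_neq0 (ll_gt0 hl)).
  - exact: s_cvg.
  - exact: rr_cvg.
  - exact: lL_cvg.
apply: near_eq_cvg; near=> L.
apply: esym; apply: meanH_G => //.
Unshelve. all: by end_near.
Qed.
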